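(* For every $\theta\in V_\Lambda$, $\mathcal P(\theta)^\perp=\overline{\mathcal Q}(\theta)$ and ${}^\perp\overline{\mathcal Q}(\theta)=\mathcal P(\theta)$. In particular, if $\mathcal W(\theta)=\{0\}$ then $\overline{\mathcal Q}(\theta)=\mathcal Q(\theta)$, so $\mathcal Q(\theta)=\mathcal P(\theta)^\perp$ and $\mathcal P(\theta)={}^\perp\mathcal Q(\theta)$.
   Context: Let $\Lambda$ be a finite dimensional algebra over a field with $n$ isoclasses of simple modules, and $\mathrm{mod}\text-\Lambda$ the category of finitely generated right $\Lambda$-modules. Fix a torsion class $\mathcal G\subseteq\mathrm{mod}\text-\Lambda$ (closed under isomorphisms, extensions and quotients). For $B\in\mathcal G$, a subobject of $B$ is a submodule in $\mathcal G$; a subobject $A\subseteq B$ is strict if $A\cap B'\in\mathcal G$ for every subobject $B'$ of $B$; a strict quotient of $B$ is $B/A$ with $A$ a strict subobject. A strict morphism is a homomorphism $f:A\to B$ with $A,B\in\mathcal G$ such that $\ker f\in\mathcal G$ is a strict subobject of $A$ and $\operatorname{im} f$ is a strict subobject of $B$. For $\mathcal X\subseteq\mathcal G$, $\mathcal X^\perp$ is the class of $Y\in\mathcal G$ such that every strict morphism $X\to Y$ with $X\in\mathcal X$ is zero, and ${}^\perp\mathcal X$ is the class of $Y\in\mathcal G$ such that every strict morphism $Y\to X$ with $X\in\mathcal X$ is zero. Let $V_\Lambda=\mathrm{Hom}_{\mathbb Z}(K_0\Lambda,\mathbb R)\cong\mathbb R^n$; $\theta(M)$ denotes $\theta$ applied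 to the dimension vector of $M$. Define: $\mathcal P(\theta)$ = $\{0\}$ together with all nonzero $M\in\mathcal G$ with $\theta(M'')>0$ for every nonzero strict quotient $M''$ of $M$ (including $M$); $\mathcal Q(\theta)$ = $\{0\}$ together with all nonzero $N\in\mathcal G$ with $\theta(N')<0$ for every nonzero strict subobject $N'$ of $N$ (including $N$); $\overline{\mathcal Q}(\theta)$ = all $N\in\mathcal G$ with $\theta(N')\le0$ for every strict subobject $N'$ of $N$. For $M\in\mathcal G$, $D_{\mathcal G}(M)$ is the set of $\theta$ with $\theta(M)=0$ and $\theta(M')\le0$ for all strict subobjects $M'$ of $M$, and $\mathcal W(\theta)$ is the class of $X\in\mathcal G$ with $\theta\in D_{\mathcal G}(X)$. *)

(* Defs.v *)
From HB Require Import structures.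
From mathcomp Require Import all_boot all_order all_algebra falgebra.
From mathcomp Require Import reals.
Set Implicit Arguments. Unset Strict Implicit. Unset Printing Implicit Defensive.
Import Order.TTheory GRing.Theory Num.Theory.
Local Open Scope ring_scope.

(* A finitely generated right module over a finite-dimensional F-algebra
   Lam is a finite-dimensional F-space F^d (row vectors) with a right action
   v . a := v *m ract a. *)
Record rmod (F : fieldType) (Lam : falgType F) := RMod {
  rdim : nat;
  ract : Lam -> 'M[F]_rdim }.

Definition is_rmod (F : fieldType) (Lam : falgType F) (M : rmod Lam) : Prop :=
  [/\ forall (k : F) (a b : Lam), ract M (k *: a + b) = k *: ract M a + ract M b,
      ract M 1 = 1%:M
    & forall a b : Lam, ract M (a * b) = ract M a *m ract M b].

Definition submod (F : fieldType) (Lam : falgType F) (M : rmod Lam) k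
  (U : 'M[F]_(k, rdim M)) : Prop :=
  forall a : Lam, (U *m ract M a <= U)%MS.

(* f : N -> M is an isomorphism of N onto the subquotient U/V of M
   (V <= U submodules of M) *)
Definition sq_iso (F : fieldType) (Lam : falgType F) (N M : rmod Lam) k l
  (U : 'M[F]_(k, rdim M)) (V : 'M[F]_(l, rdim M)) (f : 'M[F]_(rdim N, rdim M))
  : Prop :=
  [/\ forall a : Lam, (ract N a *m f - f *m ract M a <= V)%MS,
      (f + V == U)%MS
    & \rank (f + V)%MS = (rdim N + \rank V)%N].
Arguments sq_iso {F Lam} N M {k l} U V f.

Definition inG (F : fieldType) (Lam : falgType F) (G : rmod Lam -> Prop)
  (M : rmod Lam) k l (U : 'M[F]_(k, rdim M)) (V : 'M[F]_(l, rdim M)) : Prop :=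
  exists (N : rmod Lam) (f : 'M[F]_(rdim N, rdim M)),
    [/\ is_rmod N, G N & sq_iso N M U V f].
Arguments inG {F Lam} G M {k l} U V.

(* G is a torsion class: closed under isomorphisms, quotients, extensions *)
Definition torsion_class (F : fieldType) (Lam : falgType F)
  (G : rmod Lam -> Prop) : Prop :=
  [/\ (forall (M N : rmod Lam) (f : 'M[F]_(rdim M, rdim N)),
         is_rmod M -> is_rmod N -> G M ->
         sq_iso M N (1%:M : 'M[F]_(rdim N)) (0 : 'M[F]_(rdim N)) f -> G N),
      (forall (M : rmod Lam) k (U : 'M[F]_(k, rdim M)),
         is_rmod M -> G M -> submod U -> inG G M (1%:M : 'M[F]_(rdim M)) U)
    & (forall (M : rmod Lam) k (U : 'M[F]_(k, rdim M)),
         is_rmod M -> submod U -> inG G M U (0 : 'M[F]_(rdim M)) ->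
         inG G M (1%:M : 'M[F]_(rdim M)) U -> G M)].

(* theta in V_Lam = Hom(K_0(mod Lam), R): an additive function on short exact
   sequences 0 -> N1 -> M -> N2 -> 0 (this is the universal property of K_0). *)
Definition additive_fun (F : fieldType) (Lam : falgType F) (R : realType)
  (theta : rmod Lam -> R) : Prop :=
  forall (M N1 N2 : rmod Lam) k (U : 'M[F]_(k, rdim M))
         (f1 : 'M[F]_(rdim N1, rdim M)) (f2 : 'M[F]_(rdim N2, rdim M)),
    is_rmod M -> is_rmod N1 -> is_rmod N2 -> submod U ->
    sq_iso N1 M U (0 : 'M[F]_(rdim M)) f1 ->
    sq_iso N2 M (1%:M : 'M[F]_(rdim M)) U f2 ->
    theta M = theta N1 + theta N2.

Section Notions.
Context (F : fieldType) (Lam : falgType F) (G : rmod Lam -> Prop).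

Definition subobj (B : rmod Lam) k (U : 'M[F]_(k, rdim B)) : Prop :=
  submod U /\ inG G B U (0 : 'M[F]_(rdim B)).

Definition strict_sub (B : rmod Lam) k (U : 'M[F]_(k, rdim B)) : Prop :=
  subobj U /\
  forall l (B' : 'M[F]_(l, rdim B)), subobj B' ->
    inG G B (U :&: B')%MS (0 : 'M[F]_(rdim B)).

Definition strict_morph (X Y : rmod Lam) (f : 'M[F]_(rdim X, rdim Y)) : Prop :=
  [/\ G X, G Y, forall a : Lam, ract X a *m f = f *m ract Y a,
      strict_sub (kermx f) & strict_sub f].

Definition perp (C : rmod Lam -> Prop) (Y : rmod Lam) : Prop :=
  G Y /\ forall (X : rmod Lam) (f : 'M[F]_(rdim X, rdim Y)),
    is_rmod X -> C X -> strict_morph f -> f = 0.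

Definition lperp (C : rmod Lam -> Prop) (Y : rmod Lam) : Prop :=
  G Y /\ forall (X : rmod Lam) (f : 'M[F]_(rdim Y, rdim X)),
    is_rmod X -> C X -> strict_morph f -> f = 0.

Context (R : realType) (theta : rmod Lam -> R).

Definition Pcl (M : rmod Lam) : Prop :=
  G M /\
  (rdim M = 0%N \/
   forall k (A : 'M[F]_(k, rdim M)), strict_sub A -> ~~ row_full A ->
     forall (N : rmod Lam) (f : 'M[F]_(rdim N, rdim M)),
       is_rmod N -> sq_iso N M (1%:M : 'M[F]_(rdim M)) A f -> 0 < theta N).

Definition Qcl (M : rmod Lam) : Prop :=
  G M /\
  (rdim M = 0%N \/
   forall k (A : 'M[F]_(k, rdim M)), strict_sub A -> A != 0 ->
     forall (N : rmod Lam) (f : 'M[F]_(rdim N, rdim M)),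
       is_rmod N -> sq_iso N M A (0 : 'M[F]_(rdim M)) f -> theta N < 0).

Definition Qbar (M : rmod Lam) : Prop :=
  G M /\
  forall k (A : 'M[F]_(k, rdim M)), strict_sub A ->
    forall (N : rmod Lam) (f : 'M[F]_(rdim N, rdim M)),
      is_rmod N -> sq_iso N M A (0 : 'M[F]_(rdim M)) f -> theta N <= 0.

(* W(theta): X in G with theta in D_G(X) *)
Definition Wcl (M : rmod Lam) : Prop := Qbar M /\ theta M = 0.

End Notions.

(* Main.v *)
Require Import Defs.
From HB Require Import structures.
From mathcomp Require Import all_boot all_order all_algebra falgebra.
From mathcomp Require Import reals.
From mathcomp Require Import zify lra.
From Stdlib Require Import Classical Lia.
Import Order.TTheory GRing.Theory Num.Theory.
Local Open Scope ring_scope.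
Set Implicit Arguments. Unset Strict Implicit. Unset Printing Implicit Defensive.


Section MxAux.
Variable F : fieldType.

Lemma L8 n p m1 m2 m3 (x : 'M[F]_(m1, n)) (U : 'M_(m2, n)) (W : 'M_(m3, n)) (f : 'M_(n, p)) :
  (x <= U)%MS -> (W <= U)%MS -> (U :&: kermx f <= W)%MS -> (x *m f <= W *m f)%MS -> (x <= W)%MS.
Proof.
move=> xU WU kW /submxP[D eD].
have e : x = (x - D *m W) + D *m W by rewrite subrK.
rewrite e addmx_sub ?submxMl //; apply: submx_trans kW.
rewrite sub_capmx addmx_sub ?eqmx_opp ?xU ?(submx_trans (submxMl _ _) WU) //=.
by apply/sub_kermxP; rewrite mulmxBl -mulmxA -eD subrr.
Qed.

Lemma inj_sub n p m1 m3 (x : 'M[F]_(m1, n)) (W : 'M_(m3, n)) (f : 'M_(n, p)) :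
  row_free f -> (x *m f <= W *m f)%MS = (x <= W)%MS.
Proof.
move=> rf; apply/idP/idP; last exact: submxMr.
move=> h; apply: (@L8 _ _ _ _ _ x 1%:M W f) => //; rewrite ?submx1 //.
move: rf; rewrite -kermx_eq0 => /eqP ->; by rewrite capmx0 sub0mx.
Qed.

End MxAux.


Section ModAux.
Variables (F : fieldType) (Lam : falgType F).
Implicit Types (M N X Y K : rmod Lam).

Definition homm X Y (f : 'M[F]_(rdim X, rdim Y)) :=
  forall a : Lam, ract X a *m f = f *m ract Y a.

Lemma sq_iso_hom N M k (U : 'M[F]_(k, rdim M)) f :
  sq_iso N M U (0 : 'M_(rdim M)) f -> homm f.
Proof. by case=> h _ _ a; apply/eqP; rewrite -subr_eq0 -submx0; exact: h. Qed.

Lemma sq_iso_eq N M k l k' l' (U : 'M[F]_(k, rdim M)) (V : 'M_(l, rdim M))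
  (U' : 'M_(k', rdim M)) (V' : 'M_(l', rdim M)) f :
  (U :=: U')%MS -> (V :=: V')%MS -> sq_iso N M U V f -> sq_iso N M U' V' f.
Proof.
move=> eU eV [h1 h2 h3]; split.
- by move=> a; rewrite -eV.
- apply/eqmxP; apply: eqmx_trans (eqmx_sym (adds_eqmx (eqmx_refl f) eV)) _.
  by apply: eqmx_trans eU; apply/eqmxP.
- by rewrite -(adds_eqmx (eqmx_refl f) eV) -eV.
Qed.

Lemma sq_iso_VU N M k l (U : 'M[F]_(k, rdim M)) (V : 'M_(l, rdim M)) f :
  sq_iso N M U V f -> (V <= U)%MS.
Proof. by case=> _ /andP[h _] _; apply: submx_trans h; rewrite addsmxSr. Qed.

Lemma sq_iso_fU N M k l (U : 'M[F]_(k, rdim M)) (V : 'M_(l, rdim M)) f :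
  sq_iso N M U V f -> (f <= U)%MS.
Proof. by case=> _ /andP[h _] _; apply: submx_trans h; rewrite addsmxSl. Qed.

Lemma sq_iso_rank N M k l (U : 'M[F]_(k, rdim M)) (V : 'M_(l, rdim M)) f :
  sq_iso N M U V f -> \rank U = (rdim N + \rank V)%N.
Proof. by case=> _ /eqmxP e <-; rewrite e. Qed.

Lemma pushI X Y K k l (f : 'M[F]_(rdim X, rdim Y)) (U : 'M_(k, rdim X)) (V : 'M_(l, rdim X)) h :
  homm f -> sq_iso K X U V h -> (U :&: kermx f <= V)%MS ->
  sq_iso K Y (U *m f) (V *m f) (h *m f).
Proof.
move=> hf si kV; have VU := sq_iso_VU si; have rk := sq_iso_rank si.
case: si => h1 /eqmxP h2 h3; split.
- move=> a; have -> : h *m f *m ract Y a = h *m ract X a *m f.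
    by rewrite -mulmxA -hf mulmxA.
  rewrite mulmxA -mulmxBl; exact: submxMr.
- by apply/eqmxP; apply: eqmx_trans (eqmx_sym (addsmxMr _ _ _)) _; apply: eqmxMr.
- have e1 := mxrank_mul_ker U f; have e2 := mxrank_mul_ker V f.
  have e3 : (V :&: kermx f :=: U :&: kermx f)%MS.
    apply/eqmxP; rewrite !sub_capmx capmxSr (submx_trans (capmxSl _ _) VU).
    by rewrite kV capmxSr.
  have e0 : (h *m f + V *m f :=: U *m f)%MS.
    exact: eqmx_trans (eqmx_sym (addsmxMr _ _ _)) (eqmxMr _ h2).
  rewrite e0.
  move: e1 e2; rewrite e3 rk; lia.
Qed.

Lemma liftI X Y K k l (f : 'M[F]_(rdim X, rdim Y)) (U : 'M_(k, rdim X)) (V : 'M_(l, rdim X)) h :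
  homm f -> submod U -> (V <= U)%MS -> (U :&: kermx f <= V)%MS ->
  sq_iso K Y (U *m f) (V *m f) h -> exists h', sq_iso K X U V h'.
Proof.
move=> hf sU VU kV si; have hU := sq_iso_fU si; have rk := sq_iso_rank si.
case: si => h1 /eqmxP h2 h3.
set h' := h *m pinvmx (U *m f) *m U.
have eh : h' *m f = h by rewrite /h' -mulmxA mulmxKpV.
have h'U : (h' <= U)%MS by rewrite submxMl.
exists h'; split.
- move=> a; apply: (L8 (U := U) (f := f)) => //.
    rewrite addmx_sub ?eqmx_opp ?(submx_trans (submxMl _ _) h'U) //.
    exact: submx_trans (submxMr _ h'U) (sU a).
  rewrite mulmxBl -[ract K a *m h' *m f]mulmxA eh.
  by rewrite -mulmxA hf mulmxA eh.
- have sW : (h' + V <= U)%MS by rewrite addsmx_sub h'U VU.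
  apply/andP; split => //; apply: (L8 (U := U) (f := f)) => //.
    by apply: submx_trans kV _; rewrite addsmxSr.
  by rewrite addsmxMr eh -h2.
- have e1 := mxrank_mul_ker U f; have e2 := mxrank_mul_ker V f.
  have e3 : (V :&: kermx f :=: U :&: kermx f)%MS.
    apply/eqmxP; rewrite !sub_capmx capmxSr (submx_trans (capmxSl _ _) VU).
    by rewrite kV capmxSr.
  have e4 : (h' + V :=: U)%MS.
    apply/eqmxP; apply/andP; split; first by rewrite addsmx_sub h'U VU.
    apply: (L8 (U := U) (f := f)) => //; first by rewrite addsmx_sub h'U VU.
      by apply: submx_trans kV _; rewrite addsmxSr.
    by rewrite addsmxMr eh -h2.
  rewrite e4; move: e1 e2 h3; rewrite e3 -h2; lia.
Qed.

End ModAux.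


Section Cons.
Variables (F : fieldType) (Lam : falgType F).
Implicit Types (M N X Y K : rmod Lam).

Definition subM M k (U : 'M[F]_(k, rdim M)) : rmod Lam :=
  @RMod F Lam (\rank U) (fun a => row_base U *m ract M a *m pinvmx (row_base U)).

Definition Zm : rmod Lam := @RMod F Lam 0 (fun _ => 0).

Lemma sub0col m1 m2 (A : 'M[F]_(m1, 0)) (B : 'M_(m2, 0)) : (A <= B)%MS.
Proof. by apply: submx_full; rewrite /row_full eqn_leq rank_leq_col. Qed.

Lemma rank0col m1 (A : 'M[F]_(m1, 0)) : \rank A = 0%N.
Proof. by apply/eqP; rewrite -leqn0 rank_leq_col. Qed.

Lemma Zm_rmod : is_rmod Zm.
Proof. by split => *; rewrite [LHS]flatmx0 [RHS]flatmx0. Qed.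

Lemma subM_e M k (U : 'M[F]_(k, rdim M)) a : submod U ->
  row_base U *m ract M a *m pinvmx (row_base U) *m row_base U = row_base U *m ract M a.
Proof.
move=> sU; rewrite mulmxKpV // eq_row_base; apply: submx_trans (sU a).
by apply: submxMr; rewrite eq_row_base.
Qed.

Lemma subM_rmod M k (U : 'M[F]_(k, rdim M)) : is_rmod M -> submod U -> is_rmod (subM U).
Proof.
move=> [h1 h2 h3] sU; split => /=.
- by move=> c a b; rewrite h1 mulmxDr mulmxDl -scalemxAr -scalemxAl.
- by rewrite h2 mulmx1 mulmxVp ?row_base_free.
- move=> a b.
  have e : row_base U *m ract M a *m pinvmx (row_base U) *m row_base U = row_base U *m ract M a.
    rewrite mulmxKpV // eq_row_base; apply: submx_trans (sU a).
    by apply: submxMr; rewrite eq_row_base.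
  rewrite h3; set P := pinvmx _; set rb := row_base U in e *.
  by rewrite [RHS]mulmxA [_ *m (rb *m _)]mulmxA e mulmxA.
Qed.

Lemma subM_hom M k (U : 'M[F]_(k, rdim M)) : submod U -> homm (row_base U : 'M_(rdim (subM U), rdim M)).
Proof.
by move=> sU a /=; apply: subM_e.
Qed.

Lemma subM_iso M k (U : 'M[F]_(k, rdim M)) : submod U ->
  sq_iso (subM U) M U (0 : 'M_(rdim M)) (row_base U).
Proof.
move=> sU; split.
- by move=> a; rewrite (subM_hom sU) subrr sub0mx.
- by rewrite !addsmx0 !eq_row_base submx_refl.
- by rewrite addsmx0 eq_row_base mxrank0 addn0.
Qed.

Lemma kermx_free m n (f : 'M[F]_(m, n)) : row_free f -> kermx f = 0.
Proof. by rewrite -kermx_eq0 => /eqP. Qed.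

Lemma rep_free N M k (U : 'M[F]_(k, rdim M)) h :
  sq_iso N M U (0 : 'M_(rdim M)) h -> row_free h.
Proof.
move=> si; have := sq_iso_rank si; case: si => _ /eqmxP e _.
by rewrite -e addsmx0 mxrank0 addn0 => r; rewrite /row_free r.
Qed.

Lemma rep_eq N M k (U : 'M[F]_(k, rdim M)) h :
  sq_iso N M U (0 : 'M_(rdim M)) h -> (h :=: U)%MS.
Proof. by case=> _ /eqmxP e _; apply: eqmx_trans e; apply: eqmx_sym; apply: addsmx0. Qed.

Lemma rep_submod N M k (U : 'M[F]_(k, rdim M)) h :
  sq_iso N M U (0 : 'M_(rdim M)) h -> submod U.
Proof.
move=> si a; have e := rep_eq si; rewrite -e -(eqmxMr _ e) -(sq_iso_hom si).
exact: submxMl.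
Qed.

Lemma rep_iso N N' M k (U : 'M[F]_(k, rdim M)) h h' :
  sq_iso N M U (0 : 'M_(rdim M)) h -> sq_iso N' M U (0 : 'M_(rdim M)) h' ->
  exists phi, sq_iso N N' (1%:M : 'M_(rdim N')) (0 : 'M_(rdim N')) phi.
Proof.
move=> si si'; apply: (liftI (f := h')).
- exact: sq_iso_hom si'.
- by move=> a; rewrite submx1.
- exact: sub0mx.
- by rewrite kermx_free ?(rep_free si') // capmx0 sub0mx.
- apply: sq_iso_eq si; first by rewrite mul1mx; apply: eqmx_sym; exact: rep_eq si'.
  by rewrite mul0mx; apply: eqmx_sym; apply: eqmx0.
Qed.

Lemma sub_rep N M k (U : 'M[F]_(k, rdim M)) h :
  sq_iso N M U (0 : 'M_(rdim M)) h ->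
  exists phi, sq_iso N (subM U) (1%:M : 'M_(rdim (subM U))) (0 : 'M_(rdim (subM U))) phi.
Proof.
move=> si; have sU := rep_submod si.
apply: rep_iso si (subM_iso sU).
Qed.

End Cons.


Section Theta.
Variables (F : fieldType) (Lam : falgType F) (R : realType) (theta : rmod Lam -> R).
Hypothesis addf : additive_fun theta.
Implicit Types (M N X Y K : rmod Lam).

Lemma theta_Z : theta (Zm Lam) = 0.
Proof.
have si : sq_iso (Zm Lam) (Zm Lam) (0 : 'M[F]_(0,0)) (0 : 'M_(rdim (Zm Lam))) 0.
  by split => [a||]; rewrite ?sub0col ?rank0col.
have si2 : sq_iso (Zm Lam) (Zm Lam) (1%:M : 'M[F]_(rdim (Zm Lam))) (0 : 'M_(0,0)) 0.
  by split => [a||]; rewrite ?sub0col ?rank0col.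
have := addf (Zm_rmod Lam) (Zm_rmod Lam) (Zm_rmod Lam) _ si si2.
move=> /(_ (fun a => sub0col _ _)) e.
by apply: (addrI (theta (Zm Lam))); rewrite addr0 -e.
Qed.

Lemma theta_iso N M (phi : 'M[F]_(rdim N, rdim M)) : is_rmod N -> is_rmod M ->
  sq_iso N M 1%:M (0 : 'M_(rdim M)) phi -> theta N = theta M.
Proof.
move=> rN rM si.
have si2 : sq_iso (Zm Lam) M 1%:M 1%:M (0 : 'M_(0, rdim M)).
  split => [a||]; first by rewrite submx1.
    by rewrite !adds0mx submx_refl.
  by rewrite adds0mx.
have := addf rM rN (Zm_rmod Lam) (fun a => submx1 _) si si2.
by rewrite theta_Z addr0.
Qed.

Lemma theta_dim0 N : is_rmod N -> rdim N = 0%N -> theta N = 0.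
Proof.
move=> rN hN; rewrite -theta_Z; symmetry; apply: (@theta_iso (Zm Lam) N 0) => //.
  exact: Zm_rmod.
split => [a||].
- by rewrite mulmx0 mul0mx subrr sub0mx.
- by rewrite submx1 /= sub1mx /row_full addsmx0 mxrank0 hN.
- by rewrite addsmx0 !mxrank0.
Qed.

Lemma rep_rank N M k (U : 'M[F]_(k, rdim M)) h :
  sq_iso N M U (0 : 'M_(rdim M)) h -> \rank U = rdim N.
Proof. by move/sq_iso_rank; rewrite mxrank0 addn0. Qed.

Lemma quot_rank N M k (U : 'M[F]_(k, rdim M)) h :
  sq_iso N M 1%:M U h -> rdim M = (rdim N + \rank U)%N.
Proof. by move/sq_iso_rank; rewrite mxrank1. Qed.

Lemma theta_sub N M k (U : 'M[F]_(k, rdim M)) h : is_rmod N -> is_rmod M ->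
  sq_iso N M U (0 : 'M_(rdim M)) h -> theta N = theta (subM U).
Proof.
move=> rN rM si; have [phi si'] := sub_rep si.
apply: theta_iso si' => //; apply: subM_rmod rM (rep_submod si).
Qed.

Lemma theta_quot N M k (U : 'M[F]_(k, rdim M)) g : is_rmod N -> is_rmod M -> submod U ->
  sq_iso N M 1%:M U g -> theta N = theta M - theta (subM U).
Proof.
move=> rN rM sU si.
have := addf rM (subM_rmod rM sU) rN sU (subM_iso sU) si.
by move=> ->; rewrite addrAC subrr add0r.
Qed.

Lemma theta_nz_dim N : is_rmod N -> theta N != 0 -> (0 < rdim N)%N.
Proof.
move=> rN; case: (posnP (rdim N)) => // h; by rewrite theta_dim0 ?eqxx.
Qed.

End Theta.

Section GLemmas.
Variables (F : fieldType) (Lam : falgType F) (G : rmod Lam -> Prop).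
Hypothesis tc : torsion_class G.
Implicit Types (M N X Y K : rmod Lam).

Lemma G_rep N M k (U : 'M[F]_(k, rdim M)) h : is_rmod N -> is_rmod M ->
  inG G M U (0 : 'M_(rdim M)) -> sq_iso N M U (0 : 'M_(rdim M)) h -> G N.
Proof.
move=> rN rM [N0 [f0 [rN0 GN0 si0]]] si.
have [phi si'] := rep_iso si0 si.
by case: tc => iso _ _; apply: iso si'.
Qed.

Lemma subM_G M k (U : 'M[F]_(k, rdim M)) : is_rmod M -> submod U ->
  inG G M U (0 : 'M_(rdim M)) -> G (subM U).
Proof.
move=> rM sU iU; apply: G_rep iU (subM_iso sU) => //; exact: subM_rmod.
Qed.

Lemma inG_eq M k l k' l' (U : 'M[F]_(k, rdim M)) (V : 'M_(l, rdim M))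
  (U' : 'M_(k', rdim M)) (V' : 'M_(l', rdim M)) :
  (U :=: U')%MS -> (V :=: V')%MS -> inG G M U V -> inG G M U' V'.
Proof.
move=> eU eV [N [f [rN GN si]]]; exists N, f; split => //.
exact: sq_iso_eq si.
Qed.

Lemma inG_push X Y k l (f : 'M[F]_(rdim X, rdim Y)) (U : 'M_(k, rdim X)) (V : 'M_(l, rdim X)) :
  homm f -> inG G X U V -> (U :&: kermx f <= V)%MS -> inG G Y (U *m f) (V *m f).
Proof.
move=> hf [N [g [rN GN si]]] kV; exists N, (g *m f); split => //.
exact: pushI.
Qed.

Lemma inG_lift X Y k l (f : 'M[F]_(rdim X, rdim Y)) (U : 'M_(k, rdim X)) (V : 'M_(l, rdim X)) :
  homm f -> submod U -> (V <= U)%MS -> (U :&: kermx f <= V)%MS ->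
  inG G Y (U *m f) (V *m f) -> inG G X U V.
Proof.
move=> hf sU VU kV [N [g [rN GN si]]].
have [h' si'] := liftI hf sU VU kV si.
by exists N, h'.
Qed.

Lemma submod_eq M k k' (U : 'M[F]_(k, rdim M)) (U' : 'M_(k', rdim M)) :
  (U :=: U')%MS -> submod U -> submod U'.
Proof. by move=> eU sU a; rewrite -eU -(eqmxMr _ eU). Qed.

Lemma submod_cap M k l (U : 'M[F]_(k, rdim M)) (V : 'M_(l, rdim M)) :
  submod U -> submod V -> submod (U :&: V)%MS.
Proof.
move=> sU sV a; rewrite sub_capmx.
rewrite (submx_trans (submxMr _ (capmxSl _ _)) (sU a)).
by rewrite (submx_trans (submxMr _ (capmxSr _ _)) (sV a)).
Qed.

Lemma submod_adds M k l (U : 'M[F]_(k, rdim M)) (V : 'M_(l, rdim M)) :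
  submod U -> submod V -> submod (U + V)%MS.
Proof.
move=> sU sV a; rewrite addsmxMr addsmxS //.
Qed.

Lemma submod1 M : submod (1%:M : 'M[F]_(rdim M)).
Proof. by move=> a; rewrite submx1. Qed.

Lemma submod0 M k : submod (0 : 'M[F]_(k, rdim M)).
Proof. by move=> a; rewrite mul0mx sub0mx. Qed.

Lemma subobj_eq M k k' (U : 'M[F]_(k, rdim M)) (U' : 'M_(k', rdim M)) :
  (U :=: U')%MS -> subobj G U -> subobj G U'.
Proof.
move=> eU [sU iU]; split; first exact: submod_eq sU.
exact: inG_eq iU.
Qed.

Lemma strict_eq M k k' (U : 'M[F]_(k, rdim M)) (U' : 'M_(k', rdim M)) :
  (U :=: U')%MS -> strict_sub G U -> strict_sub G U'.
Proof.
move=> eU [oU cU]; split; first exact: subobj_eq oU.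
move=> l B' oB'; apply: inG_eq (cU l B' oB') => //.
exact: cap_eqmx.
Qed.

Definition has_zero := exists Z0, [/\ is_rmod Z0, G Z0 & rdim Z0 = 0%N].

Lemma G_zero Y : is_rmod Y -> G Y -> has_zero.
Proof.
move=> rY GY; case: tc => _ quo _.
have [N [f [rN GN si]]] := quo Y _ _ rY GY (@submod1 Y).
exists N; split => //; have := sq_iso_rank si; rewrite mxrank1; lia.
Qed.

Lemma inG_zero M k : has_zero -> inG G M (0 : 'M[F]_(k, rdim M)) (0 : 'M_(rdim M)).
Proof.
move=> [Z0 [rZ GZ hZ]]; exists Z0, 0; split => //; split => [a||].
- by rewrite mulmx0 mul0mx subrr sub0mx.
- by rewrite addsmx_sub !sub0mx.
- by rewrite addsmx0 !mxrank0 hZ.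
Qed.

Lemma strict_zero M k : has_zero -> strict_sub G (0 : 'M[F]_(k, rdim M)).
Proof.
move=> hz; split; first by split; [exact: submod0 | exact: inG_zero].
by move=> l B' _; rewrite cap0mx; apply: inG_zero.
Qed.

Lemma subobj1 M : is_rmod M -> G M -> subobj G (1%:M : 'M[F]_(rdim M)).
Proof.
move=> rM GM; split; first exact: submod1.
exists M, 1%:M; split => //; split => [a||].
- by rewrite mulmx1 mul1mx subrr sub0mx.
- by rewrite !addsmx0 submx_refl.
- by rewrite addsmx0 mxrank1 mxrank0 addn0.
Qed.

Lemma strict1 M : is_rmod M -> G M -> strict_sub G (1%:M : 'M[F]_(rdim M)).
Proof.
move=> rM GM; split; first exact: subobj1.
move=> l B' [_ iB']; apply: inG_eq iB' => //.
apply: eqmx_sym; apply/capmx_idPr; exact: submx1.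
Qed.

End GLemmas.


Section Strict.
Variables (F : fieldType) (Lam : falgType F) (G : rmod Lam -> Prop).
Hypothesis tc : torsion_class G.
Implicit Types (M N X Y K : rmod Lam).

Lemma strict_push N M k (A : 'M[F]_(k, rdim M)) h k' (A' : 'M_(k', rdim N)) :
  is_rmod N -> is_rmod M -> sq_iso N M A (0 : 'M_(rdim M)) h ->
  strict_sub G A -> strict_sub G A' -> strict_sub G (A' *m h).
Proof.
move=> rN rM si [[sA iA] cA] [[sA' iA'] cA'].
have hf := sq_iso_hom si; have rf := rep_free si; have ker0 := kermx_free rf.
have eA := rep_eq si.
have k0 m m' (W : 'M_(m, rdim N)) (Z : 'M_(m', rdim N)) : (W :&: kermx h <= Z)%MS.
  by rewrite ker0 capmx0 sub0mx.
split.
  split.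
    by move=> a; rewrite -mulmxA -hf mulmxA submxMr.
  apply: (inG_eq _ _ (inG_push hf iA' (k0 _ _ _ _))); first exact: eqmx_refl.
  by rewrite mul0mx; apply: eqmx0.
move=> l B' [sB' iB'].
have iC := cA l B' (conj sB' iB').
set C := (A :&: B')%MS in iC.
have Ch : (C <= h)%MS by rewrite eA capmxSl.
set Cp := C *m pinvmx h.
have eCp : Cp *m h = C by rewrite /Cp mulmxKpV.
have sCp : submod Cp.
  move=> a; rewrite -(inj_sub _ _ rf) -mulmxA hf mulmxA eCp.
  exact: submod_cap sA sB' a.
have iCp : inG G N Cp (0 : 'M_(rdim N)).
  apply: (inG_lift (f := h)) => //; first exact: sub0mx.
  apply: (inG_eq _ _ iC); first by rewrite eCp; apply: eqmx_refl.
  by rewrite mul0mx; apply: eqmx_sym; apply: eqmx0.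
have := inG_push hf (cA' _ _ (conj sCp iCp)) (k0 _ _ _ _).
apply: inG_eq; last by rewrite mul0mx; apply: eqmx0.
apply/eqmxP; apply/andP; split.
  rewrite sub_capmx submxMr ?capmxSl //=.
  apply: submx_trans (submxMr _ (capmxSr _ _)) _; rewrite eCp; exact: capmxSr.
set x := (A' *m h :&: B')%MS.
have xh : (x <= h)%MS by apply: submx_trans (capmxSl _ _) _; apply: submxMl.
rewrite -(mulmxKpV xh) submxMr // sub_capmx.
rewrite -(inj_sub _ _ rf) mulmxKpV // capmxSl /=.
rewrite -(inj_sub _ _ rf) mulmxKpV // eCp /C sub_capmx capmxSr andbT.
by rewrite -eA.
Qed.

End Strict.


Section Quot.
Variables (F : fieldType) (Lam : falgType F).
Implicit Types (M N X Y K : rmod Lam).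

Lemma quot_map X N0 k (A : 'M[F]_(k, rdim X)) g : submod A ->
  sq_iso N0 X 1%:M A g ->
  exists q : 'M_(rdim X, rdim N0),
    [/\ homm q, (kermx q :=: A)%MS, g *m q = 1%:M & (1%:M - q *m g <= A)%MS].
Proof.
move=> sA si; have rk := sq_iso_rank si; case: si => h1 /eqmxP h2 _.
set n0 := rdim N0; set r := \rank A.
pose Bm : 'M_(n0 + r, rdim X) := col_mx g (row_base A).
have eB : (Bm :=: 1%:M)%MS.
  apply: eqmx_trans (eqmx_sym (addsmxE _ _)) _.
  by apply: eqmx_trans (adds_eqmx (eqmx_refl g) (eq_row_base A)) h2.
have fullB : row_full Bm by rewrite /row_full eB mxrank1.
have freeB : row_free Bm by rewrite /row_free eB rk.
pose P := pinvmx Bm.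
have BP : Bm *m P = 1%:M := mulmxVp freeB.
have PB : P *m Bm = 1%:M := mulVpmx fullB.
have [gP rbP] : g *m P = row_mx 1%:M 0 /\ row_base A *m P = row_mx 0 1%:M.
  by move: BP; rewrite mul_col_mx scalar_mx_block /block_mx => /eq_col_mx.
pose q := P *m col_mx (1%:M : 'M_n0) (0 : 'M_(r, n0)).
have gq : g *m q = 1%:M by rewrite /q mulmxA gP mul_row_col mulmx1 mul0mx addr0.
have rbq : row_base A *m q = 0 by rewrite /q mulmxA rbP mul_row_col mul0mx mulmx0 addr0.
have Aq : A *m q = 0.
  have AR : (A <= row_base A)%MS by rewrite eq_row_base.
  by rewrite -(mulmxKpV AR) -mulmxA rbq mulmx0.
have Aker : (A <= kermx q)%MS by apply/sub_kermxP.
have Hqg : (1%:M - q *m g <= A)%MS.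
  have -> : 1%:M - q *m g = P *m col_mx 0 (row_base A).
    rewrite -PB /q -mulmxA -mulmxBr mul_col_mx mul1mx mul0mx /Bm.
    by rewrite opp_col_mx add_col_mx subrr oppr0 addr0.
  by apply: mulmx_sub; rewrite col_mx_sub sub0mx eq_row_base submx_refl.
exists q; split => //.
- move=> a.
  set e := ract N0 a *m g - g *m ract X a.
  have eq0 : e *m q = 0 by apply/sub_kermxP; apply: submx_trans Aker; exact: h1.
  have E1 : (1%:M - q *m g) *m ract X a *m q = 0.
    apply/sub_kermxP; apply: submx_trans Aker.
    exact: submx_trans (submxMr _ Hqg) (sA a).
  have E2 : g *m ract X a = ract N0 a *m g - e by rewrite /e opprB addrC subrK.
  have E3 : ract X a *m q = (1%:M - q *m g) *m ract X a *m q + q *m (g *m ract X a) *m q.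
    by rewrite [q *m (g *m _)]mulmxA -mulmxDl -mulmxDl subrK mul1mx.
  rewrite E3 E1 add0r E2 mulmxBr mulmxBl -[q *m e *m q]mulmxA eq0 mulmx0 subr0.
  by rewrite -!mulmxA gq mulmx1.
- apply/eqmxP; apply/andP; split => //.
  have -> : kermx q = kermx q *m (1%:M - q *m g).
    by rewrite mulmxBr mulmx1 mulmxA mulmx_ker mul0mx subr0.
  exact: mulmx_sub.
Qed.

End Quot.


Section Ext.
Variables (F : fieldType) (Lam : falgType F) (G : rmod Lam -> Prop).
Hypothesis tc : torsion_class G.
Implicit Types (M N X Y K : rmod Lam).

Lemma sub_pull M k l (U : 'M[F]_(k, rdim M)) (V : 'M_(l, rdim M)) :
  (V <= U)%MS -> (V *m pinvmx (row_base U)) *m row_base U = V.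
Proof. by move=> VU; rewrite mulmxKpV // eq_row_base. Qed.

Lemma submod_pull M k l (U : 'M[F]_(k, rdim M)) (V : 'M_(l, rdim M)) :
  submod U -> submod V -> (V <= U)%MS ->
  submod (V *m pinvmx (row_base U) : 'M_(l, rdim (subM U))).
Proof.
move=> sU sV VU a; rewrite -(inj_sub _ _ (row_base_free U)).
rewrite -[X in (X <= _)%MS]mulmxA (subM_hom sU) mulmxA sub_pull //.
Qed.

Lemma strict_ext X N0 k (A : 'M[F]_(k, rdim X)) g (q : 'M_(rdim X, rdim N0))
  kc (C : 'M_(kc, rdim N0)) :
  is_rmod X -> is_rmod N0 -> G X -> strict_sub G A -> sq_iso N0 X 1%:M A g ->
  homm q -> (kermx q :=: A)%MS -> g *m q = 1%:M -> (1%:M - q *m g <= A)%MS ->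
  strict_sub G C -> strict_sub G (C *m g + A)%MS.
Proof.
move=> rX rN0 GX [[sA iA] cA] si hq eK gq Hqg [[sC iC] cC].
case: (tc) => _ quo ext.
have [he _ _] := si.
have kA : (kermx q <= A)%MS by rewrite eK.
have Aker : (A <= kermx q)%MS by rewrite eK.
set B := (C *m g + A)%MS.
have AB : (A <= B)%MS by rewrite addsmxSr.
have sB : submod B.
  move=> a; rewrite addsmxMr addsmx_sub (submx_trans (sA a) AB) andbT.
  rewrite -mulmxA.
  have -> : g *m ract X a = ract N0 a *m g - (ract N0 a *m g - g *m ract X a).
    by rewrite opprB addrC subrK.
  rewrite mulmxBr addmx_sub //.
    by apply: submx_trans (addsmxSl _ _); rewrite mulmxA submxMr // sC.
  by rewrite eqmx_opp; apply: submx_trans AB; apply: mulmx_sub; apply: he.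
have key : forall l (B' : 'M_(l, rdim X)), subobj G B' -> inG G X (B :&: B')%MS (0 : 'M_(rdim X)).
  move=> l B' [sB' iB'].
  set E := B' *m q.
  have sE : submod E by move=> a; rewrite -mulmxA -hq mulmxA submxMr // sB'.
  have iE : inG G N0 E (0 : 'M_(rdim N0)).
    set rb := row_base B'.
    have hrb : homm (rb : 'M_(rdim (subM B'), rdim X)) := subM_hom sB'.
    have k0 : kermx rb = 0 := kermx_free (row_base_free B').
    pose W' : 'M_(rdim X, rdim (subM B')) := (B' :&: A)%MS *m pinvmx rb.
    have eW : W' *m rb = (B' :&: A)%MS by apply: sub_pull; exact: capmxSl.
    have sW' : submod W'.
      by apply: submod_pull => //; [exact: submod_cap | exact: capmxSl].
    have GS : G (subM B') := subM_G tc rX sB' iB'.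
    have i1 := quo (subM B') _ W' (subM_rmod rX sB') GS sW'.
    have kc0 : (1%:M :&: kermx rb <= W')%MS by rewrite k0 capmx0 sub0mx.
    have i2 := inG_push hrb i1 kc0.
    have kcq : ((1%:M *m rb) :&: kermx q <= W' *m rb)%MS.
      rewrite mul1mx eW sub_capmx (submx_trans (capmxSl _ _)) ?eq_row_base //=.
      exact: submx_trans (capmxSr _ _) kA.
    have i3 := inG_push hq i2 kcq.
    apply: (inG_eq _ _ i3).
    - rewrite mul1mx; exact: eqmxMr (eq_row_base B').
    - rewrite eW.
      have -> : (B' :&: A)%MS *m q = 0 by apply/sub_kermxP; apply: submx_trans Aker; exact: capmxSr.
      exact: eqmx0.
  have iCE := cC _ E (conj sE iE).
  set D := (B :&: B')%MS.
  have sD : submod D := submod_cap sB sB'.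
  have eDq : (D *m q :=: C :&: E)%MS.
    apply/eqmxP; apply/andP; split.
      rewrite sub_capmx submxMr ?capmxSr // andbT.
      apply: submx_trans (submxMr _ (capmxSl _ _)) _.
      rewrite addsmxMr addsmx_sub -mulmxA gq mulmx1 submx_refl /=.
      by rewrite (sub_kermxP Aker) sub0mx.
    set Yc := (C :&: E)%MS.
    have YE : (Yc <= E)%MS by exact: capmxSr.
    set b := Yc *m pinvmx E *m B'.
    have bq : b *m q = Yc by rewrite /b -mulmxA mulmxKpV.
    rewrite -bq submxMr // sub_capmx submxMl andbT.
    have -> : b = b *m (q *m g) + b *m (1%:M - q *m g).
      by rewrite mulmxBr mulmx1 addrC subrK.
    rewrite addmx_sub //; last exact: submx_trans (mulmx_sub _ Hqg) AB.
    rewrite mulmxA bq; apply: submx_trans (addsmxSl _ _); apply: submxMr.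
    exact: capmxSl.
  have iDDA : inG G X D (D :&: A)%MS.
    apply: (inG_lift (f := q)) => //.
    - exact: capmxSl.
    - by rewrite capmxS.
    apply: (inG_eq _ _ iCE); first exact: eqmx_sym eDq.
    have -> : (D :&: A)%MS *m q = 0 by apply/sub_kermxP; apply: submx_trans Aker; exact: capmxSr.
    by apply: eqmx_sym; exact: eqmx0.
  have iDA : inG G X (D :&: A)%MS (0 : 'M_(rdim X)).
    apply: (inG_eq _ _ (cA l B' (conj sB' iB'))) => //.
    apply/eqmxP; apply/andP; split.
      by rewrite !sub_capmx capmxSl capmxSr (submx_trans (capmxSl _ _) AB).
    by rewrite sub_capmx capmxSr /= (submx_trans (capmxSl _ _) (capmxSr B B')).
  pose rbD : 'M_(rdim (subM D), rdim X) := row_base D.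
  have hrbD : homm (rbD : 'M_(rdim (subM D), rdim X)) := subM_hom sD.
  have k0 : kermx rbD = 0 := kermx_free (row_base_free D).
  pose U : 'M_(rdim X, rdim (subM D)) := (D :&: A)%MS *m pinvmx rbD.
  have eU : U *m rbD = (D :&: A)%MS by apply: sub_pull; exact: capmxSl.
  have sU : submod U.
    by apply: submod_pull => //; [exact: submod_cap | exact: capmxSl].
  have iU : inG G (subM D) U (0 : 'M_(rdim (subM D))).
    apply: (inG_lift (f := rbD)) => //; first exact: sub0mx.
      by rewrite k0 capmx0 sub0mx.
    apply: (inG_eq _ _ iDA); first by rewrite eU; exact: eqmx_refl.
    by rewrite mul0mx; apply: eqmx_sym; exact: eqmx0.
  have iU1 : inG G (subM D) 1%:M U.
    apply: (inG_lift (f := rbD)) => //; first exact: submod1.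
    - exact: submx1.
    - by rewrite k0 capmx0 sub0mx.
    apply: (inG_eq _ _ iDDA); last by rewrite eU; exact: eqmx_refl.
    by rewrite mul1mx; apply: eqmx_sym; exact: eq_row_base.
  have GD : G (subM D) := ext _ _ U (subM_rmod rX sD) sU iU iU1.
  by exists (subM D), rbD; split => //; [exact: subM_rmod | exact: subM_iso].
split; last exact: key.
split => //.
apply: (inG_eq _ _ (key _ _ (subobj1 rX GX))); last exact: eqmx_refl.
by apply/capmx_idPl; exact: submx1.
Qed.

End Ext.


Section MainS.
Variables (F : fieldType) (Lam : falgType F) (G : rmod Lam -> Prop)
  (R : realType) (theta : rmod Lam -> R).
Hypothesis tc : torsion_class G.
Hypothesis addf : additive_fun theta.
Implicit Types (M N X Y K : rmod Lam).

Lemma PQ_zero X Y (f : 'M[F]_(rdim X, rdim Y)) : is_rmod X -> is_rmod Y ->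
  Pcl G theta X -> Qbar G theta Y -> strict_morph G f -> f = 0.
Proof.
move=> rX rY [GX PX] [GY QY] [_ _ hf sK sI].
case: PX => [d0 | PX].
  apply/eqP; rewrite -mxrank_eq0 -leqn0.
  by apply: leq_trans (rank_leq_row f) _; rewrite d0.
case: (eqVneq f 0) => // nz; exfalso.
have nf : ~~ row_full (kermx f).
  apply/negP => fK; move/negP: nz; apply; apply/eqP.
  by rewrite -[f]mul1mx; apply/sub_kermxP; rewrite sub1mx.
case: tc => _ quo _.
have [N0 [g [rN0 GN0 si]]] := quo X _ (kermx f) rX GX sK.1.1.
have pos := PX _ _ sK nf N0 g rN0 si.
have si2 : sq_iso N0 Y f (0 : 'M_(rdim Y)) (g *m f).
  apply: sq_iso_eq (pushI hf si (capmxSr _ _)).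
    by rewrite mul1mx; exact: eqmx_refl.
  by rewrite mulmx_ker; exact: eqmx0.
have := QY _ f sI N0 (g *m f) rN0 si2.
by rewrite leNgt pos.
Qed.

Lemma perp_Qbar Y : is_rmod Y -> perp G (Pcl G theta) Y -> Qbar G theta Y.
Proof.
move=> rY [GY HY]; split => //.
have hz := G_zero tc rY GY.
suff H : forall n k (A : 'M_(k, rdim Y)), (\rank A < n)%N -> strict_sub G A ->
    forall N h, is_rmod N -> sq_iso N Y A (0 : 'M_(rdim Y)) h -> theta N <= 0.
  by move=> k A; apply: (H (\rank A).+1).
elim=> [|n IH] // k A rk sA N h rN si.
rewrite leNgt; apply/negP => pos.
have GN := G_rep tc rN rY sA.1.2 si.
have dN := theta_nz_dim addf rN (lt0r_neq0 pos).
have hf := sq_iso_hom si; have rf := rep_free si.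
case: (classic (Pcl G theta N)) => [PN | nPN].
  have sm : strict_morph G h.
    split => //.
      rewrite kermx_free //; exact: strict_zero.
    exact: strict_eq (eqmx_sym (rep_eq si)) sA.
  have h0 := HY N h rN PN sm.
  move: rf; rewrite /row_free h0 mxrank0 => /eqP d0.
  by move: dN; rewrite -d0.
apply: nPN; split => //; right => k' A' sA' nf N' f' rN' si'.
rewrite ltNge; apply/negP => le.
have sA'm := sA'.1.1.
have eq1 := theta_quot addf rN' rN sA'm si'.
have sAh := strict_push rN rY si sA sA'.
have siS : sq_iso (subM A') Y (A' *m h) (0 : 'M_(rdim Y)) (row_base A' *m h).
  apply: sq_iso_eq (pushI hf (subM_iso sA'm) _).
  - exact: eqmx_refl.
  - by rewrite mul0mx; exact: eqmx0.
  - by rewrite kermx_free // capmx0 sub0mx.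
have rkA' : (\rank (A' *m h) < n)%N.
  rewrite mxrankMfree //.
  have : (\rank A' < rdim N)%N.
    by rewrite ltn_neqAle rank_leq_col andbT.
  have := rep_rank si; lia.
have := IH _ _ rkA' sAh (subM A') _ (subM_rmod rN sA'm) siS.
lra.
Qed.

Lemma lperp_P X : is_rmod X -> lperp G (Qbar G theta) X -> Pcl G theta X.
Proof.
move=> rX [GX HX]; split => //; right.
suff H : forall n k (A : 'M_(k, rdim X)), (rdim X - \rank A < n)%N -> strict_sub G A ->
    ~~ row_full A -> forall N f, is_rmod N -> sq_iso N X 1%:M A f -> 0 < theta N.
  by move=> k A; apply: (H (rdim X - \rank A).+1).
elim=> [|n IH] // k A mlt sA nf N f rN si.
rewrite ltNge; apply/negP => le.
case: (tc) => _ quo _.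
have sAm := sA.1.1.
have [N0 [g [rN0 GN0 si0]]] := quo X _ A rX GX sAm.
have eN0 : theta N0 = theta N.
  by rewrite (theta_quot addf rN0 rX sAm si0) (theta_quot addf rN rX sAm si).
have [q [hq eK gq Hqg]] := quot_map sAm si0.
have r0 := quot_rank si0.
have dN0 : (0 < rdim N0)%N.
  by move: nf r0; rewrite /row_full; lia.
have fq : row_full q.
  rewrite /row_full eqn_leq rank_leq_col /=.
  by rewrite -{1}(mxrank1 F (rdim N0)) -gq mxrankM_maxr.
case: (classic (Qbar G theta N0)) => [QN0 | nQ].
  have sm : strict_morph G q.
    split => //.
      exact: strict_eq (eqmx_sym eK) sA.
    apply: strict_eq (strict1 rN0 GN0).
    by apply/eqmxP; rewrite submx1 sub1mx fq.
  have q0 := HX N0 q rN0 QN0 sm.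
  move: gq; rewrite q0 mulmx0 => /(congr1 mxrank); rewrite mxrank0 mxrank1 => d0.
  by move: dN0; rewrite -d0.
apply: nQ; split => // k' C sC N1 f1 rN1 si1.
rewrite leNgt; apply/negP => pos1.
have sCm := sC.1.1.
have sB := strict_ext tc rX rN0 GX sA si0 hq eK gq Hqg sC.
set B := (C *m g + A)%MS in sB.
have [N2 [g2 [rN2 GN2 si2]]] := quo N0 _ C rN0 GN0 sCm.
have Bq : (B *m q :=: C)%MS.
  apply: eqmx_trans (addsmxMr _ _ _) _.
  rewrite -mulmxA gq mulmx1 (sub_kermxP (_ : A <= kermx q)%MS); last by rewrite eK.
  exact: addsmx0.
have [h2 siB] : exists h2, sq_iso N2 X 1%:M B h2.
  apply: (liftI hq (@submod1 _ _ X)).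
  - exact: submx1.
  - apply: submx_trans (capmxSr _ _) _; rewrite eK; exact: addsmxSr.
  apply: sq_iso_eq si2; last exact: eqmx_sym Bq.
  by rewrite mul1mx; apply/eqmxP; rewrite submx1 sub1mx fq.
have e2 := theta_quot addf rN2 rN0 sCm si2.
have e1 := theta_sub addf rN1 rN0 si1.
have neg2 : theta N2 < 0 by lra.
have dN1 := theta_nz_dim addf rN1 (lt0r_neq0 pos1).
have dN2 := theta_nz_dim addf rN2 (ltr0_neq0 neg2).
have rB := quot_rank siB.
have rC := quot_rank si2.
have rkC := rep_rank si1.
have nfB : ~~ row_full B by rewrite /row_full; lia.
have mltB : (rdim X - \rank B < n)%N by lia.
have := IH _ B mltB sB nfB N2 h2 rN2 siB.
lra.
Qed.



Lemma Q_Qbar M : is_rmod M -> Qcl G theta M -> Qbar G theta M.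
Proof.
move=> rM [GM QM]; split => // k A sA N f rN si.
have rk := rep_rank si.
case: QM => [d0 | QM].
  rewrite theta_dim0 //; move: (rank_leq_col A); lia.
case: (eqVneq A 0) => [A0 | nz].
  by rewrite theta_dim0 // -rk A0 mxrank0.
exact: ltW (QM _ _ sA nz N f rN si).
Qed.

Hypothesis HW : forall X : rmod Lam, is_rmod X -> Wcl G theta X -> rdim X = 0%N.

Lemma Qbar_Q M : is_rmod M -> Qbar G theta M -> Qcl G theta M.
Proof.
move=> rM [GM QM]; split => //; right => k A sA nz N f rN si.
have le := QM _ A sA N f rN si.
rewrite lt_neqAle le andbT; apply/negP => /eqP e0.
have GN := G_rep tc rN rM sA.1.2 si.
have hf := sq_iso_hom si.
have WN : Wcl G theta N.
  split => //; split => // k' A' sA' N' f' rN' si'.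
  apply: (QM _ (A' *m f) (strict_push rN rM si sA sA') N' (f' *m f) rN').
  apply: sq_iso_eq (pushI hf si' _).
  - exact: eqmx_refl.
  - by rewrite mul0mx; exact: eqmx0.
  - by rewrite kermx_free ?(rep_free si) // capmx0 sub0mx.
have := HW rN WN; rewrite -(rep_rank si) => /eqP; rewrite mxrank_eq0.
by rewrite (negbTE nz).
Qed.

End MainS.

Unset Implicit Arguments.

Theorem mainTheorem13 (F : fieldType) (Lam : falgType F)
  (G : rmod Lam -> Prop) (R : realType) (theta : rmod Lam -> R) :
  torsion_class G -> additive_fun theta ->
  [/\ (forall M : rmod Lam, is_rmod M ->
         (perp G (Pcl G theta) M <-> Qbar G theta M)),
      (forall M : rmod Lam, is_rmod M ->
         (lperp G (Qbar G theta) M <-> Pcl G theta M))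
    & ((forall X : rmod Lam, is_rmod X -> Wcl G theta X -> rdim X = 0%N) ->
       [/\ (forall M : rmod Lam, is_rmod M -> (Qbar G theta M <-> Qcl G theta M)),
           (forall M : rmod Lam, is_rmod M ->
              (Qcl G theta M <-> perp G (Pcl G theta) M))
         & (forall M : rmod Lam, is_rmod M ->
              (Pcl G theta M <-> lperp G (Qcl G theta) M))])].
Proof.
move=> tc addf.
have P1 : forall M : rmod Lam, is_rmod M -> (perp G (Pcl G theta) M <-> Qbar G theta M).
  move=> M rM; split; first exact: perp_Qbar.
  move=> QM; split; first exact: QM.1.
  by move=> X f rX PX sm; apply: PQ_zero rX rM PX QM sm.
have P2 : forall M : rmod Lam, is_rmod M -> (lperp G (Qbar G theta) M <-> Pcl G theta M).
  move=> M rM; split; first exact: lperp_P.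
  move=> PM; split; first exact: PM.1.
  by move=> Y f rY QY sm; apply: PQ_zero rM rY PM QY sm.
split => // HW.
have P3 : forall M : rmod Lam, is_rmod M -> (Qbar G theta M <-> Qcl G theta M).
  move=> M rM; split; [exact: Qbar_Q | exact: Q_Qbar].
split => //.
- move=> M rM; rewrite P1 //; exact: iff_sym (P3 M rM).
- move=> M rM; rewrite -P2 //; split => -[GM H]; split => // Y f rY QY sm.
  + by apply: (H Y f rY _ sm); apply: Q_Qbar.
  + by apply: (H Y f rY _ sm); apply: Qbar_Q.
Qed.
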